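(* For every integer $d\geq 1$ and every finite abelian group $A$, the wreath product $A\wr\mathbb{Z}^d=\left(\bigoplus_{g\in\mathbb{Z}^d}A\right)\rtimes\mathbb{Z}^d$ (with $\mathbb{Z}^d$ acting by shifting coordinates) embeds in $\mathrm{IET}$.
   Context: $\mathrm{IET}$ denotes the group of interval exchange transformations of $[0,1)$: bijections of $[0,1)$ that are orientation-preserving piecewise isometries (piecewise translations), left-continuous, with finitely many discontinuity points. *)

(* Defs.v *)
From Stdlib Require Import Reals.
From mathcomp Require Import all_boot all_order all_algebra.
Set Implicit Arguments. Unset Strict Implicit. Unset Printing Implicit Defensive.
Import GRing.Theory.

Definition in01 (x : R) : Prop := Rle R0 x /\ Rlt x R1.

(* T : R -> R is regarded only through its restriction to [0,1).
   T is an IET iff it restricts to a bijection of [0,1) and there are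
   finitely many points 0 = a_0 < a_1 < ... < a_n = 1 such that T is a
   translation x |-> x + c_i on each [a_i, a_{i+1}). *)
Definition is_IET (T : R -> R) : Prop :=
  (forall x, in01 x -> in01 (T x)) /\
  (forall x y, in01 x -> in01 y -> T x = T y -> x = y) /\
  (forall y, in01 y -> exists x, in01 x /\ T x = y) /\
  exists (n : nat) (a c : nat -> R),
    a 0%N = R0 /\ a n = R1 /\
    (forall i, (i < n)%N -> Rlt (a i) (a i.+1)) /\
    (forall i x, (i < n)%N -> Rle (a i) x -> Rlt x (a i.+1) ->
       T x = Rplus x (c i)).

Local Open Scope ring_scope.

Notation Zd d := 'rV[int]_d.

(* finitely supported functions Z^d -> A : elements of (+)_{g in Z^d} A *)
Definition fin_supp (A : finZmodType) (d : nat) (f : Zd d -> A) : Prop :=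
  exists s : seq (Zd d), forall g, f g != 0 -> g \in s.

Definition zshift (A : finZmodType) (d : nat) (v : Zd d) (f : Zd d -> A)
  : Zd d -> A := fun g => f (g - v).

Definition wr_mul (A : finZmodType) (d : nat)
  (x y : (Zd d -> A) * Zd d) : (Zd d -> A) * Zd d :=
  ((fun g => x.1 g + zshift x.2 y.1 g), x.2 + y.2).

(* Main.v *)
Require Import Defs.
From Stdlib Require Import Reals Lra Lia ZArith.
From mathcomp Require Import all_boot all_order all_algebra.
From mathcomp Require Import Rstruct.
Import GRing.Theory Num.Theory.
From mathcomp Require Import zify.
From Stdlib Require Import ClassicalEpsilon.
Module RealPart.
Local Open Scope R_scope.

Definition fl (r : R) : Z := Z.sub (up r) 1.
Definition fr (r : R) : R := r - IZR (fl r).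

Lemma fl_spec r : IZR (fl r) <= r /\ r < IZR (fl r) + 1.
Proof.
  unfold fl. destruct (archimed r) as [H1 H2]. rewrite minus_IZR. simpl. lra.
Qed.

Lemma fl_unique r m : IZR m <= r -> r < IZR m + 1 -> fl r = m.
Proof.
  intros H1 H2. unfold fl. assert (up r = Z.add m 1).
  { symmetry. apply tech_up; rewrite plus_IZR; simpl; lra. }
  lia.
Qed.

Lemma fr_range r : 0 <= fr r /\ fr r < 1.
Proof. unfold fr. destruct (fl_spec r). lra. Qed.

Lemma fl_add_int r m : fl (r + IZR m) = Z.add (fl r) m.
Proof. destruct (fl_spec r). apply fl_unique; rewrite plus_IZR; lra. Qed.

Lemma fr_add_int r m : fr (r + IZR m) = fr r.
Proof. unfold fr. rewrite fl_add_int plus_IZR. lra. Qed.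

Lemma fr_fr a b : fr (fr a + b) = fr (a + b).
Proof.
  unfold fr at 2. replace (a - IZR (fl a) + b) with ((a + b) + IZR (- fl a)).
  apply fr_add_int. rewrite opp_IZR. lra.
Qed.

Lemma fr_id r : 0 <= r < 1 -> fr r = r.
Proof. intros [H1 H2]. unfold fr. rewrite (fl_unique r 0); simpl; lra. Qed.

Lemma fr_eq_int a b : fr a = fr b -> exists m : Z, a - b = IZR m.
Proof. unfold fr. intros H. exists (Z.sub (fl a) (fl b)). rewrite minus_IZR. lra. Qed.

Lemma fl_step a b : a <= b -> fl a <> fl b -> a < IZR (fl b) /\ IZR (fl b) <= b.
Proof.
  intros Hab Hne. destruct (fl_spec a) as [A1 A2]. destruct (fl_spec b) as [B1 B2].
  split; [|lra].
  assert (Z.lt (fl a) (fl b)).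
  { destruct (Z.lt_total (fl a) (fl b)) as [H|[H|H]]; [exact H| congruence|].
    exfalso. apply Z.lt_le_incl in H. 
    assert (IZR (fl b) + 1 <= IZR (fl a)).
    { rewrite <- plus_IZR. apply IZR_le. lia. } lra. }
  assert (IZR (fl a) + 1 <= IZR (fl b)). { rewrite <- plus_IZR. apply IZR_le. lia. }
  lra.
Qed.

Lemma fr_of_pt g m : 0 <= IZR m - g < 1 -> fr (- g) = IZR m - g.
Proof.
  intros H. replace (IZR m - g) with (-g + IZR m) in * by lra.
  rewrite <- (fr_add_int (-g) m). apply fr_id. exact H.
Qed.

Lemma local_const t1 t2 g :
  0 <= t1 -> t1 <= t2 -> t2 < 1 ->
  ~ (t1 < fr (- g) <= t2) -> ~ (t1 < fr (/2 - g) <= t2) ->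
  fl (t1 + g) = fl (t2 + g) /\
  (fr (t1 + g) < /2 <-> fr (t2 + g) < /2).
Proof.
  intros H0 H12 H1 Hp Hq.
  assert (Hfl : fl (t1 + g) = fl (t2 + g)).
  { destruct (Z.eq_dec (fl (t1 + g)) (fl (t2 + g))) as [E|E]; [exact E|].
    exfalso. destruct (fl_step (t1+g) (t2+g)) as [C1 C2]; [lra|exact E|].
    apply Hp. rewrite (fr_of_pt g (fl (t2 + g))); lra. }
  split; [exact Hfl|]. unfold fr. rewrite Hfl.
  split; intro H; [|lra].
  destruct (Rlt_dec (t2 + g - IZR (fl (t2 + g))) (/2)) as [L|L]; [exact L|].
  exfalso. apply Hq. 
  replace (/2 - g) with (-(g - /2)) by lra.
  rewrite (fr_of_pt (g - /2) (fl (t2 + g))); [lra|].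
  destruct (fl_spec (t2 + g)). lra.
Qed.

End RealPart.
Import RealPart.
Set Implicit Arguments. Unset Strict Implicit. Unset Printing Implicit Defensive.
Fixpoint qp (i : nat) : nat :=
  match i with 0 => s2val (prime_above 2) | S j => s2val (prime_above (qp j)) end.

Lemma qp_prime i : prime (qp i).
Proof. case: i => [|i] /=; by case: prime_above. Qed.

Lemma qp_gt2 i : (2 < qp i)%N.
Proof.
  elim: i => [|i IH] /=; first by case: prime_above.
  apply: leq_trans IH _. apply: ltnW. by case: prime_above.
Qed.

Lemma qp_mono i j : (i < j)%N -> (qp i < qp j)%N.
Proof.
  elim: j => [|j IH] //. rewrite ltnS leq_eqVlt => /orP [/eqP ->|H].
  - rewrite /=. by case: prime_above.
  - apply: ltn_trans (IH H) _. rewrite /=. by case: prime_above.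
Qed.

Lemma qp_inj i j : (qp i == qp j) = (i == j).
Proof.
  case: (ltngtP i j) => [H|H|->]; last by rewrite eqxx.
  - by apply/negbTE; rewrite neq_ltn (qp_mono H).
  - by apply/negbTE; rewrite neq_ltn (qp_mono H) orbT.
Qed.

Lemma logn_prodP p d (F : 'I_d -> nat) : (forall i, 0 < F i)%N ->
  logn p (\prod_(i < d) F i) = \sum_(i < d) logn p (F i).
Proof.
  move=> HF.
  have: (0 < \prod_(i < d) F i)%N /\ logn p (\prod_(i < d) F i) = \sum_(i < d) logn p (F i).
    apply: (big_ind2 (fun x y => (0 < x)%N /\ logn p x = y)).
    - by rewrite logn1.
    - move=> x1 x2 y1 y2 [Hx1 E1] [Hy1 E2]; split; first by rewrite muln_gt0 Hx1.
      by rewrite lognM // E1 E2.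
    - move=> i _; split => //.
  by case.
Qed.

Lemma prod_inj d (e e' : 'I_d -> nat) (a b : nat) :
  (\prod_(i < d) qp i ^ e i * 2 ^ a = \prod_(i < d) qp i ^ e' i * 2 ^ b)%N ->
  forall i, e i = e' i.
Proof.
  move=> E i.
  have key : forall (e : 'I_d -> nat) a,
      logn (qp i) (\prod_(j < d) qp j ^ e j * 2 ^ a) = e i.
    move=> e0 a0.
    have pos : forall j : 'I_d, (0 < qp j ^ e0 j)%N.
      by move=> j; rewrite expn_gt0 prime_gt0 ?qp_prime.
    rewrite lognM; last by rewrite expn_gt0.
      2: by apply: (big_ind (fun x => 0 < x)%N) => // x y; rewrite muln_gt0 => -> ->.
    have H2 : (qp i == 2) = false by rewrite gtn_eqF // qp_gt2.
    rewrite lognX (logn_prime _ (isT : prime 2)) H2 muln0 addn0.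
    rewrite logn_prodP // (bigD1 i) //= lognX (logn_prime _ (qp_prime _)) eqxx muln1.
    rewrite big1 ?addn0 // => j Hj. rewrite lognX (logn_prime _ (qp_prime _)) qp_inj /=.
    rewrite (_ : (nat_of_ord i == j) = false) ?muln0 //. by apply/negbTE; rewrite eq_sym.
  by rewrite -(key e a) E key.
Qed.
Local Open Scope ring_scope.

Definition ipart (z:int) : nat := match z with Posz n => n | Negz _ => 0%N end.
Definition inpart (z:int) : nat := match z with Posz _ => 0%N | Negz n => n.+1 end.

Lemma int_split (z : int) : (z%:~R : R) = Rminus (INR (ipart z)) (INR (inpart z)).
Proof.
  case: z => n; rewrite [ipart _]/= [inpart _]/=.
  - by rewrite (_ : INR 0 = 0) // RminusE subr0 INRE.
  - by rewrite (_ : INR 0 = 0) // RminusE sub0r INRE NegzE mulrNz.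
Qed.

Lemma int_split0 (z : int) : ipart z = inpart z -> z = 0.
Proof. by case: z => n //= ->. Qed.

Lemma IZR_split (m : Z) : IZR m = Rminus (INR (Z.to_nat m)) (INR (Z.to_nat (Z.opp m))).
Proof.
  rewrite !INR_IZR_INZ -minus_IZR. f_equal. lia.
Qed.

Section LnS.
Local Open Scope R_scope.
Lemma ln_INR_mul (m n : nat) : (0 < m)%N -> (0 < n)%N ->
  ln (INR (m * n)) = ln (INR m) + ln (INR n).
Proof.
  move=> Hm Hn. rewrite INRE natrM -!INRE -RmultE. apply: ln_mult; apply: lt_0_INR; by apply/ltP.
Qed.
Lemma ln_INR_exp (p e : nat) : (0 < p)%N -> ln (INR (p ^ e)) = INR e * ln (INR p).
Proof.
  move=> Hp. rewrite INRE natrX -RpowE -!INRE. apply: ln_pow; apply: lt_0_INR; by apply/ltP.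
Qed.
Lemma ln2_pos : 0 < ln (INR 2).
Proof. rewrite -ln_1. apply: ln_increasing; simpl; lra. Qed.
End LnS.

Lemma lnP d (e : 'I_d -> nat) (a : nat) :
  ln (INR (\prod_(i < d) qp i ^ e i * 2 ^ a)%N) =
  \sum_(i < d) (INR (e i) * ln (INR (qp i))) + INR a * ln (INR 2).
Proof.
  have pos : forall j : 'I_d, (0 < qp j ^ e j)%N.
    by move=> j; rewrite expn_gt0 prime_gt0 ?qp_prime.
  have : (0 < \prod_(i < d) qp i ^ e i)%N /\
     ln (INR (\prod_(i < d) qp i ^ e i)) = \sum_(i < d) (INR (e i) * ln (INR (qp i))).
    apply: (big_ind2 (fun (x : nat) (y : R) => (0 < x)%N /\ ln (INR x) = y)).
    - by split => //; rewrite /= ln_1.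
    - move=> x1 x2 y1 y2 [Hx1 E1] [Hy1 E2]; split; first by rewrite muln_gt0 Hx1.
      by rewrite ln_INR_mul // E1 E2.
    - move=> i _; split => //. by rewrite ln_INR_exp // prime_gt0 ?qp_prime.
  move=> [H1 H2]. rewrite ln_INR_mul ?expn_gt0 // H2 ln_INR_exp //.
Qed.

Definition alpha (i : nat) : R := ln (INR (qp i)) / ln (INR 2).
Definition beta d (v : 'rV[int]_d) : R := \sum_(i < d) ((v 0 i)%:~R * alpha i).

Lemma beta_add d (v w : 'rV[int]_d) : beta (v + w) = beta v + beta w.
Proof.
  rewrite /beta -big_split /=. apply: eq_bigr => i _. by rewrite mxE intrD mulrDl.
Qed.
Lemma beta_opp d (v : 'rV[int]_d) : beta (- v) = - beta v.
Proof.
  rewrite /beta -sumrN. apply: eq_bigr => i _. by rewrite mxE intrN mulNr.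
Qed.
Lemma beta_sub d (v w : 'rV[int]_d) : beta (v - w) = beta v - beta w.
Proof. by rewrite beta_add beta_opp. Qed.
Lemma beta0 d : beta (0 : 'rV[int]_d) = 0.
Proof. rewrite /beta big1 // => i _. by rewrite mxE mul0r. Qed.


Lemma beta_int d (v : 'rV[int]_d) (m : Z) : beta v = IZR m -> v = 0.
Proof.
  move=> H.
  set S1 := \sum_(i < d) (INR (ipart (v 0 i)) * ln (INR (qp i))).
  set S2 := \sum_(i < d) (INR (inpart (v 0 i)) * ln (INR (qp i))).
  have E : beta v * ln (INR 2) = S1 - S2.
    rewrite /beta mulr_suml /S1 /S2 -sumrB. apply: eq_bigr => i _.
    rewrite int_split /alpha RminusE RdivE -!mulrA mulVf ?mulr1 ?mulrBl //.
    by apply/eqP => E0; move: ln2_pos; rewrite E0; apply: Rlt_irrefl.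
  set l := ln (INR 2).
  set mp := Z.to_nat m. set mn := Z.to_nat (Z.opp m).
  have E' : Rmult (Rminus (INR mp) (INR mn)) l = Rminus S1 S2.
    by rewrite -IZR_split -H.
  have E2 : Rplus S1 (Rmult (INR mn) l) = Rplus S2 (Rmult (INR mp) l).
    by move: E'; clear; nra.
  pose ei := fun i => ipart (v 0 i). pose en := fun i => inpart (v 0 i).
  have E3 := lnP (fun i => ipart (v 0 i)) mn.
  have E4 := lnP (fun i => inpart (v 0 i)) mp.
  have E5 : ln (INR (\prod_(i < d) qp i ^ ei i * 2 ^ mn)%N) =
            ln (INR (\prod_(i < d) qp i ^ en i * 2 ^ mp)%N).
    by rewrite E3 E4.
  have pos : forall (e : 'I_d -> nat) a, Rlt 0 (INR (\prod_(i < d) qp i ^ e i * 2 ^ a)%N).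
    move=> e a. apply: lt_0_INR. apply/ltP. rewrite muln_gt0 expn_gt0 /= andbT.
    apply: (big_ind (fun x => 0 < x)%N) => // [x y|j _]; first by rewrite muln_gt0 => -> ->.
    by rewrite expn_gt0 prime_gt0 ?qp_prime.
  have E6 := INR_eq _ _ (ln_inv _ _ (pos _ _) (pos _ _) E5).
  have E7 := prod_inj E6.
  apply/rowP => i. rewrite mxE. apply: int_split0. exact: E7.
Qed.

Section Part.
Local Open Scope R_scope.

Definition part_ok (T : R -> R) (l r : R) :=
  exists (n : nat) (a c : nat -> R),
    a 0%N = l /\ a n = r /\
    (forall i, (i < n)%N -> Rlt (a i) (a i.+1)) /\
    (forall i x, (i < n)%N -> Rle (a i) x -> Rlt x (a i.+1) ->
       T x = Rplus x (c i)).

Lemma partition_of_breaks (T : R -> R) (B : seq R) : forall l r, l < r ->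
  (forall x y, l <= x -> x <= y -> y < r ->
     (forall b, b \in B -> ~ (x < b <= y)) -> T y - y = T x - x) ->
  part_ok T l r.
Proof.
  elim: B => [|b B IH] l r Hlr H.
  - exists 1%N, (fun i => if i is 0%N then l else r), (fun _ => T l - l).
    split; [done|split; [done|split]].
    + move=> i; case: i => [|i] //= _. 
    + move=> i x; case: i => [|i] // _ /= H1 H2.
      have := H l x (Rle_refl l) H1 H2 (fun b hb => False_ind _ (notF hb)). lra.
  - destruct (Rlt_dec l b) as [Hlb|Hlb]; destruct (Rlt_dec b r) as [Hbr|Hbr].
    + have H1 : part_ok T l b.
        apply: IH => // x y Hx Hxy Hy HB. apply: H => //; first lra.
        move=> b'; rewrite in_cons => /orP [/eqP ->|Hb']; first lra. exact: HB.
      have H2 : part_ok T b r.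
        apply: IH => // x y Hx Hxy Hy HB. apply: H => //; first lra.
        move=> b'; rewrite in_cons => /orP [/eqP ->|Hb']; first lra. exact: HB.
      move: H1 H2 => [n1 [a1 [c1 [A0 [An [As At]]]]]] [n2 [a2 [c2 [B0 [Bn [Bs Bt]]]]]].
      have n2pos : (0 < n2)%N.
        case: n2 Bn {Bs Bt} => [|n2] // Bn. rewrite B0 in Bn. lra.
      exists (n1 + n2)%N, (fun i => if (i <= n1)%N then a1 i else a2 (i - n1)%N),
        (fun i => if (i < n1)%N then c1 i else c2 (i - n1)%N).
      split; [by rewrite leq0n|split].
      * have -> : (n1 + n2 <= n1)%N = false by lia.
        by rewrite (_ : (n1 + n2 - n1 = n2)%N) //; lia.
      * split.
        -- move=> i Hi /=. case: (ltngtP i n1) => Hin.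
           ++ exact: As.
           ++ rewrite (_ : (i.+1 - n1 = (i - n1).+1)%N); last lia. apply: Bs. lia.
           ++ rewrite Hin An (_ : (n1.+1 - n1 = 1)%N); last lia. rewrite -B0. exact: Bs.
        -- move=> i x Hi /=. case: (ltngtP i n1) => Hin.
           ++ exact: At.
           ++ rewrite (_ : (i.+1 - n1 = (i - n1).+1)%N); last lia. apply: Bt. lia.
           ++ rewrite Hin An subnn (_ : (n1.+1 - n1 = 1)%N); last lia. rewrite -B0. exact: Bt.
    + apply: IH => // x y Hx Hxy Hy HB. apply: H => // b'.
      rewrite in_cons => /orP [/eqP ->|Hb']; first lra. exact: HB.
    + apply: IH => // x y Hx Hxy Hy HB. apply: H => // b'.
      rewrite in_cons => /orP [/eqP ->|Hb']; first lra. exact: HB.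
    + apply: IH => // x y Hx Hxy Hy HB. apply: H => // b'.
      rewrite in_cons => /orP [/eqP ->|Hb']; first lra. exact: HB.
Qed.
End Part.

Definition half : R := Rinv (IZR 2).
Local Open Scope ring_scope.

Lemma sum_nz (T : eqType) (M : nmodType) (w : T -> M) (s : seq T) :
  \sum_(g <- s) w g = \sum_(g <- s | w g != 0) w g.
Proof.
  rewrite [RHS]big_mkcond /=. apply: eq_bigr => g _. by case: eqP => [->|].
Qed.
Lemma sum_cover (T : eqType) (M : nmodType) (w : T -> M) (s1 s2 : seq T) :
  uniq s1 -> uniq s2 ->
  (forall g, w g != 0 -> g \in s1) -> (forall g, w g != 0 -> g \in s2) ->
  \sum_(g <- s1) w g = \sum_(g <- s2) w g.
Proof.
  move=> U1 U2 C1 C2.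
  rewrite sum_nz [RHS]sum_nz.
  rewrite -big_filter -[RHS]big_filter. apply: perm_big. apply: uniq_perm; rewrite ?filter_uniq //.
  move=> g; rewrite !mem_filter. case E: (w g != 0) => //=.
  by rewrite (C1 _ E) (C2 _ E).
Qed.

Section Main.
Variable A : finZmodType.
Variable d : nat.

Definition NA : nat := size (enum A).
Definition aval (k : nat) : A := nth 0 (enum A) k.
Definition aidx (a : A) : nat := index a (enum A).

Lemma NA_pos : (0 < NA)%N.
Proof. rewrite /NA -cardE. apply/card_gt0P. by exists 0. Qed.
Lemma aidx_lt a : (aidx a < NA)%N.
Proof. by rewrite /aidx /NA index_mem mem_enum. Qed.
Lemma avalK a : aval (aidx a) = a.
Proof. by rewrite /aval /aidx nth_index // mem_enum. Qed.
Lemma aidxK k : (k < NA)%N -> aidx (aval k) = k.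
Proof. move=> Hk. by rewrite /aval /aidx index_uniq // enum_uniq. Qed.
Lemma aidx_inj a b : aidx a = aidx b -> a = b.
Proof. move=> E. by rewrite -(avalK a) E avalK. Qed.

Definition supp (f : Zd d -> A) : seq (Zd d) :=
  undup (epsilon (inhabits [::]) (fun s => forall g, f g != 0 -> g \in s)).

Lemma supp_uniq f : uniq (supp f).
Proof. exact: undup_uniq. Qed.
Lemma supp_cover f : fin_supp f -> forall g, f g != 0 -> g \in supp f.
Proof.
  move=> H g Hg. rewrite mem_undup. 
  have := epsilon_spec (inhabits [::]) (fun s => forall g, f g != 0 -> g \in s) H.
  by move=> /(_ g Hg).
Qed.

Definition ind (gam th : R) : bool := if Rlt_dec (fr (Rplus th gam)) half then true else false.

Definition Sm (f : Zd d -> A) (v : Zd d) (th : R) (s : seq (Zd d)) : A :=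
  \sum_(g <- s) (f g *+ ind (beta (v - g)) th).

Definition NR : R := INR NA.
Definition kf (x : R) : nat := Z.to_nat (fl (Rmult NR x)).
Definition th (x : R) : R := Rminus (Rmult NR x) (INR (kf x)).
Definition enc (k : nat) (t : R) : R := Rdiv (Rplus (INR k) t) NR.

Definition Phi (x : (Zd d -> A) * Zd d) (t : R) : R :=
  enc (aidx (aval (kf t) + Sm x.1 x.2 (th t) (supp x.1)))
      (fr (Rplus (th t) (beta x.2))).

Lemma Sm_cover f v t s : fin_supp f -> uniq s -> (forall g, f g != 0 -> g \in s) ->
  Sm f v t (supp f) = Sm f v t s.
Proof.
  move=> F U C. apply: sum_cover => //; first exact: supp_uniq.
  - move=> g Hg; apply: (supp_cover F); apply/negP => /eqP E.
    by rewrite E mul0rn eqxx in Hg.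
  - move=> g Hg; apply: C; apply/negP => /eqP E.
    by rewrite E mul0rn eqxx in Hg.
Qed.

Section Enc.
Local Open Scope R_scope.

Lemma NR_pos : 0 < NR.
Proof. apply: lt_0_INR. apply/ltP. exact: NA_pos. Qed.

Lemma NR_mul_enc k t : NR * enc k t = INR k + t.
Proof. rewrite /enc. have := NR_pos. move=> H. field. lra. Qed.

Lemma dec_enc k t : (k < NA)%N -> 0 <= t < 1 -> kf (enc k t) = k /\ th (enc k t) = t.
Proof.
  move=> Hk Ht.
  have E : kf (enc k t) = k.
    rewrite /kf NR_mul_enc (fl_unique (INR k + t) (Z.of_nat k)).
    - by rewrite Nat2Z.id.
    - rewrite -INR_IZR_INZ. lra.
    - rewrite -INR_IZR_INZ. lra.
  split => //. rewrite /th E NR_mul_enc. lra.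
Qed.

Lemma kf_spec x : in01 x -> (kf x < NA)%N /\ INR (kf x) <= NR * x < INR (kf x) + 1.
Proof.
  move=> [H0 H1]. have Np := NR_pos.
  have [F1 F2] := fl_spec (NR * x).
  have Hx0 : 0 <= NR * x by nra.
  have Hx1 : NR * x < NR by nra.
  have Z0 : Z.le 0 (fl (NR * x)).
    have : Z.lt (Z.opp 1) (fl (NR * x)).
      apply: lt_IZR. rewrite opp_IZR. simpl. lra.
    lia.
  have EI : INR (kf x) = IZR (fl (NR * x)).
    by rewrite /kf INR_IZR_INZ Z2Nat.id.
  split; last by rewrite EI; lra.
  apply/ltP. apply: INR_lt. rewrite EI. change (IZR (fl (NR * x)) < NR). lra.
Qed.

Lemma th_range x : in01 x -> 0 <= th x < 1.
Proof. move=> H. have [_ [H1 H2]] := kf_spec H. rewrite /th. lra. Qed.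

Lemma enc_dec x : in01 x -> enc (kf x) (th x) = x.
Proof. move=> H. have Np := NR_pos. rewrite /enc /th. field. lra. Qed.

Lemma enc_in01 k t : (k < NA)%N -> 0 <= t < 1 -> in01 (enc k t).
Proof.
  move=> Hk Ht. have Np := NR_pos. have E := NR_mul_enc k t.
  have K : INR k + 1 <= NR.
    rewrite /NR -S_INR. apply: le_INR. apply/leP. exact: Hk.
  have K0 : 0 <= INR k := pos_INR k.
  split; nra.
Qed.

End Enc.

Lemma mulrn_nz (a : A) (b : bool) : a *+ b != 0 -> a != 0.
Proof. case: b => //=; by rewrite eqxx. Qed.

Lemma Phi_formula x s t : fin_supp x.1 -> uniq s -> (forall g, x.1 g != 0 -> g \in s) ->
  Phi x t = enc (aidx (aval (kf t) + Sm x.1 x.2 (th t) s)) (fr (Rplus (th t) (beta x.2))).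
Proof. move=> F U C. by rewrite /Phi (Sm_cover _ _ F U C). Qed.

Lemma ind_shift gam t b : ind gam (fr (Rplus t b)) = ind (Rplus gam b) t.
Proof.
  rewrite /ind fr_fr. 
  have -> : Rplus (Rplus t b) gam = Rplus t (Rplus gam b) by rewrite -?RplusE; ring.
  done.
Qed.

Lemma fin_supp_undup (f : Zd d -> A) : fin_supp f ->
  exists s, uniq s /\ forall g, f g != 0 -> g \in s.
Proof.
  move=> [s0 H]. exists (undup s0). split; first exact: undup_uniq.
  move=> g Hg. rewrite mem_undup. exact: H.
Qed.

Lemma Phi_hom x y t : fin_supp x.1 -> fin_supp y.1 -> in01 t ->
  Phi (wr_mul x y) t = Phi x (Phi y t).
Proof.
  case: x => f v; case: y => f' v' /= Fx Fy Ht.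
  have [s [Us Cs]] := fin_supp_undup Fx.
  have [s' [Us' Cs']] := fin_supp_undup Fy.
  set s'' := undup (s ++ map (fun g => g + v) s').
  have Us'' : uniq s'' by exact: undup_uniq.
  have Fxy : forall g, (wr_mul (f, v) (f', v')).1 g != 0 -> g \in s''.
    move=> g /=. rewrite /zshift /s'' mem_undup mem_cat => Hg.
    case E: (f g == 0).
    - rewrite (eqP E) add0r in Hg. apply/orP; right. apply/mapP. exists (g - v).
      + exact: Cs'.
      + by rewrite subrK.
    - by rewrite Cs // E.
  have Fxy' : fin_supp (wr_mul (f, v) (f', v')).1 by exists s''.
  rewrite (Phi_formula t Fxy' Us'' Fxy) (Phi_formula (x:=(f',v')) t Fy Us' Cs').
  set k1 := aidx (aval (kf t) + Sm f' v' (th t) s'). set t1 := fr (Rplus (th t) (beta v')).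
  have Hk1 : (k1 < NA)%N by exact: aidx_lt.
  have Ht1 : Rle 0 t1 /\ Rlt t1 1 by exact: fr_range.
  rewrite (Phi_formula (x:=(f,v)) _ Fx Us Cs) /=.
  have [-> ->] := dec_enc Hk1 Ht1.
  rewrite /k1 avalK /t1 fr_fr beta_add.
  have -> : Rplus (Rplus (th t) (beta v')) (beta v) = Rplus (th t) (beta v + beta v')
    by rewrite -?RplusE; ring.
  congr enc. congr aidx. rewrite -addrA. congr (_ + _).
  rewrite /Sm. 
  under eq_bigr do rewrite mulrnDl.
  rewrite big_split /= addrC. congr (_ + _).
  - rewrite (@sum_cover _ _ _ s'' (map (fun g => g + v) s')) //.
    + rewrite big_map. apply: eq_bigr => g _. rewrite /zshift addrK.
      congr (_ *+ _). congr ind. rewrite !beta_sub !beta_add.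
      rewrite -?RplusE -?RminusE -?RoppE; ring.
    + rewrite map_inj_uniq //. exact: addIr.
    + move=> g /mulrn_nz Hg. rewrite /s'' mem_undup mem_cat. apply/orP; right.
      apply/mapP. exists (g - v); last by rewrite subrK.
      apply: Cs'. exact: Hg.
    + move=> g /mulrn_nz Hg. apply/mapP. exists (g - v); last by rewrite subrK.
      apply: Cs'. exact: Hg.
  - rewrite (@sum_cover _ _ _ s'' s) //.
    + apply: eq_bigr => g _. rewrite ind_shift.
      congr (_ *+ _). congr ind. rewrite !beta_sub !beta_add.
      rewrite -?RplusE -?RminusE -?RoppE; ring.
    + move=> g /mulrn_nz Hg. rewrite /s'' mem_undup mem_cat Cs //.
    + move=> g /mulrn_nz Hg. exact: Cs.
Qed.


Lemma Phi_range x t : in01 t -> in01 (Phi x t).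
Proof. move=> H. apply: enc_in01; [exact: aidx_lt | exact: fr_range]. Qed.

Lemma Phi_id x t : (forall g, x.1 g = 0) -> x.2 = 0 -> in01 t -> Phi x t = t.
Proof.
  move=> H0 H2 Ht.
  have C : forall g, x.1 g != 0 -> g \in [::] by move=> g; rewrite H0 eqxx.
  have F : fin_supp x.1 by exists [::].
  rewrite (Phi_formula t F (isT : uniq [::]) C) /Sm big_nil addr0 H2 beta0.
  have [Hk _] := kf_spec Ht.
  rewrite aidxK // (_ : Rplus (th t) 0 = th t); last by rewrite -?RplusE; ring.
  rewrite fr_id; last exact: th_range.
  exact: enc_dec.
Qed.

Definition xinv (x : (Zd d -> A) * Zd d) : (Zd d -> A) * Zd d :=
  ((fun g => - x.1 (g + x.2)), - x.2).

Lemma xinv_fin x : fin_supp x.1 -> fin_supp (xinv x).1.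
Proof.
  move=> [s H]. exists (map (fun g => g - x.2) s) => g /= Hg.
  apply/mapP. exists (g + x.2); last by rewrite addrK.
  apply: H. by rewrite -oppr_eq0.
Qed.

Lemma Phi_inv_l x t : fin_supp x.1 -> in01 t -> Phi (xinv x) (Phi x t) = t.
Proof.
  move=> F Ht. rewrite -Phi_hom //; last exact: xinv_fin.
  apply: Phi_id => //=.
  - move=> g. by rewrite /zshift opprK addNr.
  - by rewrite addNr.
Qed.

Lemma Phi_inv_r x t : fin_supp x.1 -> in01 t -> Phi x (Phi (xinv x) t) = t.
Proof.
  move=> F Ht. rewrite -Phi_hom //; last exact: xinv_fin.
  apply: Phi_id => //=.
  - move=> g. by rewrite /zshift subrK addrN.
  - by rewrite addrN.
Qed.

Section Loc.
Local Open Scope R_scope.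

Lemma Phi_minus x t : in01 t -> Phi x t - t =
  (INR (aidx (aval (kf t) + Sm x.1 x.2 (th t) (supp x.1))%R) - INR (kf t) + beta x.2
    - IZR (fl (th t + beta x.2))) / NR.
Proof.
  move=> Ht. have E := enc_dec Ht. have Np := NR_pos.
  rewrite /Phi /enc /fr. rewrite /enc in E.
  set k := kf t in E *. set th0 := th t in E *. set K := INR _.
  rewrite -[X in _ - X = _]E. field. lra.
Qed.

Lemma between_enc k p a : 0 < NR -> (a < (INR k + p) / NR <-> NR * a < INR k + p).
Proof.
  move=> Np. split => H.
  - have := Rmult_lt_compat_l NR _ _ Np H. rewrite /Rdiv. 
    have -> : NR * ((INR k + p) * / NR) = INR k + p by field; lra. done.
  - apply: (Rmult_lt_reg_l NR) => //.
    have -> : NR * ((INR k + p) / NR) = INR k + p by field; lra. done.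
Qed.

Lemma between_enc2 k p a : 0 < NR -> ((INR k + p) / NR <= a <-> INR k + p <= NR * a).
Proof.
  move=> Np. split => H.
  - have := Rmult_le_compat_l NR _ _ (Rlt_le _ _ Np) H. rewrite /Rdiv. 
    have -> : NR * ((INR k + p) * / NR) = INR k + p by field; lra. done.
  - apply: (Rmult_le_reg_l NR) => //.
    have -> : NR * ((INR k + p) / NR) = INR k + p by field; lra. done.
Qed.

Definition Pts (x : (Zd d -> A) * Zd d) : seq R :=
  [:: 0; fr (- beta x.2); fr (half - beta x.2)] ++
  flatten [seq [:: fr (- beta (x.2 - g)%R); fr (half - beta (x.2 - g)%R)] | g <- supp x.1].

Definition Brk (x : (Zd d -> A) * Zd d) : seq R :=
  [seq (INR j + p) / NR | j <- iota 0 NA, p <- Pts x].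

Lemma ind_eq gam t1 t2 : 0 <= t1 -> t1 <= t2 -> t2 < 1 ->
  ~ (t1 < fr (- gam) <= t2) -> ~ (t1 < fr (half - gam) <= t2) ->
  ind gam t1 = ind gam t2.
Proof.
  move=> H0 H12 H1 Hp Hq.
  have [_ [I1 I2]] := local_const t1 t2 gam H0 H12 H1 Hp Hq.
  rewrite /ind. case: Rlt_dec => X; case: Rlt_dec => Y //.
  - by exfalso; apply: Y; apply: I1.
  - by exfalso; apply: X; apply: I2.
Qed.

Lemma Phi_local x a b : in01 a -> in01 b -> a <= b ->
  (forall p, p \in Brk x -> ~ (a < p <= b)) -> Phi x b - b = Phi x a - a.
Proof.
  move=> Ha Hb Hab HB. have Np := NR_pos.
  have [Ka [Ka1 Ka2]] := kf_spec Ha. have [Kb [Kb1 Kb2]] := kf_spec Hb.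
  have NRab : NR * a <= NR * b by apply: Rmult_le_compat_l; lra.
  have Ek : kf b = kf a.
    case: (ltngtP (kf a) (kf b)) => // Hk; exfalso.
    + have Hk' : INR (kf a) + 1 <= INR (kf b).
        rewrite -S_INR. apply: le_INR. apply/leP. exact: Hk.
      apply: (HB ((INR (kf b) + 0) / NR)).
      * apply: allpairs_f; first by rewrite mem_iota add0n Kb.
        by rewrite mem_head.
      * split; [apply/between_enc|apply/between_enc2] => //; lra.
    + have Hk' : INR (kf b) + 1 <= INR (kf a).
        rewrite -S_INR. apply: le_INR. apply/leP. exact: Hk.
      lra.
  have Hth : forall p, p \in Pts x -> ~ (th a < p <= th b).
    move=> p Hp [H1 H2]. apply: (HB ((INR (kf a) + p) / NR)).
    * apply: allpairs_f => //. by rewrite mem_iota add0n Ka.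
    * rewrite /th Ek in H2. rewrite /th in H1.
      split; [apply/between_enc|apply/between_enc2] => //; lra.
  have [ta0 ta1] := th_range Ha. have [tb0 tb1] := th_range Hb.
  have tab : th a <= th b by rewrite /th Ek; lra.
  have M1 : fr (- beta x.2) \in Pts x by rewrite /Pts mem_cat !inE eqxx !orbT.
  have M2 : fr (half - beta x.2) \in Pts x by rewrite /Pts mem_cat !inE eqxx !orbT.
  have M3 : forall g, g \in supp x.1 -> fr (- beta (x.2 - g)%R) \in Pts x.
    move=> g Hg. rewrite /Pts mem_cat. apply/orP; right. apply/flattenP.
    exists [:: fr (- beta (x.2 - g)%R); fr (half - beta (x.2 - g)%R)]; last by rewrite mem_head.
    apply/mapP. by exists g.
  have M4 : forall g, g \in supp x.1 -> fr (half - beta (x.2 - g)%R) \in Pts x.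
    move=> g Hg. rewrite /Pts mem_cat. apply/orP; right. apply/flattenP.
    exists [:: fr (- beta (x.2 - g)%R); fr (half - beta (x.2 - g)%R)]; last by rewrite !inE eqxx orbT.
    apply/mapP. by exists g.
  have [EF _] := local_const _ _ (beta x.2) ta0 tab tb1 (Hth _ M1) (Hth _ M2).
  have ES : Sm x.1 x.2 (th a) (supp x.1) = Sm x.1 x.2 (th b) (supp x.1).
    rewrite /Sm. apply: eq_big_seq => g Hg.
    by rewrite (ind_eq ta0 tab tb1 (Hth _ (M3 _ Hg)) (Hth _ (M4 _ Hg))).
  by rewrite !Phi_minus // Ek ES EF.
Qed.


End Loc.


Section Fin.
Local Open Scope R_scope.

Lemma Phi_IET x : fin_supp x.1 -> is_IET (Phi x).
Proof.
  move=> F. split; first by move=> t Ht; exact: Phi_range.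
  split.
  { move=> a b Ha Hb E. by rewrite -(Phi_inv_l F Ha) E Phi_inv_l. }
  split.
  { move=> y Hy. exists (Phi (xinv x) y). split; [exact: Phi_range | exact: Phi_inv_r]. }
  have := @partition_of_breaks (Phi x) (Brk x) 0 1 Rlt_0_1.
  apply. move=> a b H0 Hab H1 HB. apply: Phi_local => //; split; lra.
Qed.

Lemma half_pos : 0 < half.
Proof. rewrite /half. lra. Qed.
Lemma half_lt1 : half < 1.
Proof. rewrite /half. lra. Qed.

Lemma beta_half (u : Zd d) (m : Z) : beta u = half + IZR m -> False.
Proof.
  move=> H.
  have H2 : beta (u + u)%R = IZR (Z.add 1 (Z.mul 2 m)).
    rewrite beta_add H -RplusE plus_IZR mult_IZR /half. field.
  have := beta_int H2. move=> E. rewrite E beta0 in H2.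
  have := eq_IZR _ _ (esym H2). lia.
Qed.

Lemma find_delta (L : seq R) (t1 : R) : 0 < t1 -> (forall p, p \in L -> p <> t1) ->
  exists del, 0 < del /\ del <= t1 /\ del <= half /\
    forall p, p \in L -> ~ (t1 - del < p <= t1).
Proof.
  have hp := half_pos.
  elim: L => [|p L IH] Hpos Hne.
  - exists (Rmin t1 half). split; first by apply: Rmin_glb_lt.
    split; first exact: Rmin_l. split; first exact: Rmin_r. by move=> p.
  - have Hne' : forall q, q \in L -> q <> t1 by move=> q Hq; apply: Hne; rewrite in_cons Hq orbT.
    have [del [D0 [D1 [D2 D3]]]] := IH Hpos Hne'.
    have Hp := Hne p (mem_head p L).
    destruct (Rlt_dec p t1) as [Lt|Ge].
    + exists (Rmin del (t1 - p)). split; first by apply: Rmin_glb_lt; lra.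
      have M1 := Rmin_l del (t1 - p). have M2 := Rmin_r del (t1 - p).
      split; first lra. split; first lra.
      move=> q; rewrite in_cons => /orP [/eqP ->|Hq]; first lra.
      move=> [Q1 Q2]. apply: (D3 q Hq). lra.
    + exists del. split => //. split => //. split => //.
      move=> q; rewrite in_cons => /orP [/eqP ->|Hq]; first lra.
      exact: D3.
Qed.

Lemma enc_inj k1 t1 k2 t2 : (k1 < NA)%N -> (k2 < NA)%N -> 0 <= t1 < 1 -> 0 <= t2 < 1 ->
  enc k1 t1 = enc k2 t2 -> k1 = k2 /\ t1 = t2.
Proof.
  move=> K1 K2 T1 T2 E.
  have [A1 B1] := dec_enc K1 T1. have [A2 B2] := dec_enc K2 T2.
  split; [by rewrite -A1 E A2 | by rewrite -B1 E B2].
Qed.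

Lemma Phi_inj x y : fin_supp x.1 -> fin_supp y.1 ->
  (forall t, in01 t -> Phi x t = Phi y t) -> (forall g, x.1 g = y.1 g) /\ x.2 = y.2.
Proof.
  case: x => f v; case: y => f' v' /= Fx Fy H.
  have N0 : (0 < NA)%N := NA_pos.
  have key : forall t, 0 <= t < 1 ->
      aidx (aval 0 + Sm f v t (supp f))%R = aidx (aval 0 + Sm f' v' t (supp f'))%R /\
      fr (t + beta v) = fr (t + beta v').
    move=> t Ht. have Hin := enc_in01 N0 Ht. have := H _ Hin. rewrite /Phi /=.
    have [-> ->] := dec_enc N0 Ht.
    apply: enc_inj; [exact: aidx_lt | exact: aidx_lt | exact: fr_range | exact: fr_range].
  have Ev : v = v'.
    have [_ E] := key 0 (conj (Rle_refl 0) Rlt_0_1). have [m Hm] := fr_eq_int _ _ E.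
    have : beta (v - v')%R = IZR m by rewrite beta_sub -?RplusE -?RoppE; lra.
    move/beta_int. by move/eqP; rewrite subr_eq0 => /eqP.
  split => //. subst v'.
  set s := undup (supp f ++ supp f').
  have Us : uniq s := undup_uniq _.
  have Cf : forall g, f g != 0%R -> g \in s.
    by move=> g Hg; rewrite mem_undup mem_cat (supp_cover Fx).
  have Cf' : forall g, f' g != 0%R -> g \in s.
    by move=> g Hg; rewrite mem_undup mem_cat (supp_cover Fy) ?orbT.
  have D0 : forall t, 0 <= t < 1 ->
      (\sum_(g <- s) (f g - f' g) *+ ind (beta (v - g)) t)%R = 0%R.
    move=> t Ht. have [E _] := key t Ht. have E' := aidx_inj E. move/addrI: E' => E'.
    rewrite (Sm_cover v t Fx Us Cf) (Sm_cover v t Fy Us Cf') /Sm in E'.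
    under eq_bigr do rewrite mulrnBl. by rewrite sumrB E' subrr.
  move=> g0. apply/eqP; rewrite -subr_eq0; apply/negPn/negP => Hg0.
  have g0s : g0 \in s.
    case E: (f g0 == 0%R); last by apply: Cf; rewrite E.
    apply: Cf'. apply/negP => /eqP E'. by rewrite (eqP E) E' subrr eqxx in Hg0.
  set g0m := beta (v - g0)%R.
  have [T0 T1] := fr_range (half - g0m).
  set t1 := fr (half - g0m) in T0 T1 *.
  have Et1 : t1 = half - g0m - IZR (fl (half - g0m)) by [].
  have t1pos : 0 < t1.
    destruct (Rle_lt_or_eq_dec 0 t1 T0) as [Z|Z]; first done.
    exfalso. apply: (@beta_half (v - g0)%R (Z.opp (fl (half - g0m)))).
    rewrite -/g0m opp_IZR. lra.
  set L := flatten [seq [:: fr (- beta (v - g)%R); fr (half - beta (v - g)%R)]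
                   | g <- [seq g <- s | g != g0]].
  have LneP : forall p, p \in L -> p <> t1.
    move=> p /flattenP [l /mapP [g Hg ->] Hp] Ep. rewrite mem_filter in Hg.
    case/andP: Hg => Hne Hgs.
    have Eb : beta ((v - g0) - (v - g))%R = g0m - beta (v - g)%R
      by rewrite beta_sub -?RplusE -?RoppE.
    rewrite !inE in Hp; case/orP: Hp => /eqP Ep'; rewrite Ep' in Ep;
      set bg := beta (v - g)%R in Eb Ep.
    - have [m Hm] := fr_eq_int _ _ Ep.
      apply: (@beta_half ((v - g0) - (v - g))%R m). rewrite Eb. lra.
    - have [m Hm] := fr_eq_int _ _ Ep.
      have : beta ((v - g0) - (v - g))%R = IZR m by rewrite Eb; lra.
      move/beta_int/eqP. rewrite subr_eq0 => /eqP /addrI /oppr_inj E.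
      by rewrite E eqxx in Hne.
  have [del [Dp [Dt [Dh Dn]]]] := find_delta t1pos LneP.
  set t0 := t1 - del.
  have R0 : 0 <= t0 < 1 by rewrite /t0; lra.
  have R1 : 0 <= t1 < 1 by lra.
  have Ieq : forall g, g \in s -> g != g0 -> ind (beta (v - g)%R) t0 = ind (beta (v - g)%R) t1.
    move=> g Hg Hne.
    have ML : forall p, p \in [:: fr (- beta (v - g)%R); fr (half - beta (v - g)%R)] -> p \in L.
      move=> p Hp. apply/flattenP. eexists; last exact: Hp.
      apply/mapP. exists g => //. by rewrite mem_filter Hne.
    apply: ind_eq; rewrite ?/t0; try lra.
    + apply: Dn. apply: ML. exact: mem_head.
    + apply: Dn. apply: ML. by rewrite !inE eqxx orbT.
  have I1 : ind g0m t1 = false.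
    rewrite /ind.
    have -> : Rplus t1 g0m = half + IZR (Z.opp (fl (half - g0m))) by rewrite Et1 opp_IZR; ring.
    rewrite fr_add_int fr_id; last by have := half_pos; have := half_lt1; lra.
    case: Rlt_dec => // X. lra.
  have I0 : ind g0m t0 = true.
    rewrite /ind.
    have -> : Rplus t0 g0m = (half - del) + IZR (Z.opp (fl (half - g0m)))
      by rewrite /t0 Et1 opp_IZR; ring.
    rewrite fr_add_int fr_id; last by have := half_pos; have := half_lt1; lra.
    case: Rlt_dec => // X. lra.
  have S0 := D0 t0 R0. have S1 := D0 t1 R1.
  rewrite (bigD1_seq g0) //= big_seq_cond in S0.
  rewrite (bigD1_seq g0) //= big_seq_cond in S1.
  have RR : (\sum_(i <- s | (i \in s) && (i != g0)) (f i - f' i) *+ ind (beta (v - i)) t0)%R =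
            (\sum_(i <- s | (i \in s) && (i != g0)) (f i - f' i) *+ ind (beta (v - i)) t1)%R.
    apply: eq_bigr => g /andP [Hg Hne]. by rewrite Ieq.
  rewrite RR -/g0m I0 in S0. rewrite -/g0m I1 mulr0n add0r in S1.
  rewrite S1 mulr1n addr0 in S0. by rewrite S0 eqxx in Hg0.
Qed.

End Fin.

End Main.

Local Close Scope ring_scope.
Unset Implicit Arguments.

Theorem mainTheorem6 (d : nat) (A : finZmodType) (hd : (0 < d)%N) :
  exists Phi : ((Zd d -> A) * Zd d) -> (R -> R),
    (forall x, fin_supp x.1 -> is_IET (Phi x)) /\
    (forall x y, fin_supp x.1 -> fin_supp y.1 ->
       forall t, in01 t -> Phi (wr_mul x y) t = Phi x (Phi y t)) /\
    (forall x y, fin_supp x.1 -> fin_supp y.1 ->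
       (forall t, in01 t -> Phi x t = Phi y t) ->
       (forall g, x.1 g = y.1 g) /\ x.2 = y.2).
Proof.
  exists (fun x => @Phi A d x). split.
  { move=> x F. exact: Phi_IET. }
  split.
  { move=> x y Fx Fy t Ht. exact: Phi_hom. }
  { move=> x y Fx Fy H. exact: Phi_inj. }
Qed.
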